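(* Let $\mu\neq 0$ and $K$ be constants and set $\tau:=-K/\mu$. The non-constant solutions $\phi(b^2,s)$ of the system $$\phi_{22}=2(\phi_1-s\phi_{12}),\qquad -\mu b^2\left[\psi^2-(\psi_2+2s\psi_1)\right]+\mu s\psi+\mu=K\phi^2,\quad \psi:=\frac{\phi_2+2s\phi_1}{2\phi},$$ are given by $$\phi(u,v)=\frac{2q(u)\left(\sqrt{u+v^2}\pm v\right)^2}{\left[q(u)\left(\sqrt{u+v^2}\pm v\right)^2+p(u)\right]^2+\tau},\qquad u:=b^2-s^2,\ v:=s,$$ where the functions $p(u)$ and $q(u)$ satisfy $$uq^2p'+(p^2+\tau)q'=0,\qquad qp'-2pq'-uqq'-2q^2=0.$$
   Context: $\phi(b^2,s)$ is a smooth positive function; $\phi_1,\psi_1$ denote partial derivatives with respect to the first variable $b^2$, $\phi_2,\psi_2$ with respect to $s$, similarly $\phi_{12},\phi_{22}$; $p',q'$ denote derivatives with respect to $u$. *)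

(* Defs.v *)
From Stdlib Require Import Reals List.
From Coquelicot Require Import Coquelicot.
Open Scope R_scope.

(* Partial derivatives of a function phi(x, s) of two real variables,
   where x stands for b^2 (first variable) and s for the second variable. *)
Definition d1 (f : R -> R -> R) : R -> R -> R :=
  fun x s => Derive (fun y => f y s) x.
Definition d2 (f : R -> R -> R) : R -> R -> R :=
  fun x s => Derive (fun t => f x t) s.

Fixpoint pderiv (l : list bool) (f : R -> R -> R) : R -> R -> R :=
  match l with
  | nil => f
  | b :: l' => if b then d1 (pderiv l' f) else d2 (pderiv l' f)
  end.

(* The domain of (b^2, s): 0 < b^2 < b0^2 and |s| < b. *)
Definition dom (b0 x s : R) : Prop := 0 < x < b0 ^ 2 /\ s ^ 2 < x.

Definition smooth_on (b0 : R) (f : R -> R -> R) : Prop :=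
  forall (l : list bool) (x s : R), dom b0 x s ->
    ex_derive (fun y => pderiv l f y s) x /\
    ex_derive (fun t => pderiv l f x t) s /\
    continuous (fun z : R * R => pderiv l f (fst z) (snd z)) (x, s).

Definition psi_of (phi : R -> R -> R) : R -> R -> R :=
  fun x s => (d2 phi x s + 2 * s * d1 phi x s) / (2 * phi x s).

Definition pde_system (mu K : R) (phi : R -> R -> R) (x s : R) : Prop :=
  d2 (d2 phi) x s = 2 * (d1 phi x s - s * d2 (d1 phi) x s) /\
  (let psi := psi_of phi in
   - mu * x * ((psi x s) ^ 2 - (d2 psi x s + 2 * s * d1 psi x s))
   + mu * s * psi x s + mu = K * (phi x s) ^ 2).

Definition phi_formula (eps tau : R) (p q : R -> R) (u v : R) : R :=
  let w := (sqrt (u + v ^ 2) + eps * v) ^ 2 in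
  2 * q u * w / ((q u * w + p u) ^ 2 + tau).

(* Main.v *)
Require Import Defs.
From Stdlib Require Import Reals List Lra Psatz Classical.
From Coquelicot Require Import Coquelicot.
Open Scope R_scope.
Notation D1 := Defs.d1.
Notation D2 := Defs.d2.
Ltac rD Hd := match type of Hd with is_derive ?f ?v ?l =>
  replace (Derive (fun x : R => f x) v) with l by (symmetry; apply (is_derive_unique f v l Hd)) end.

Lemma CR (f : R->R->R) (X : R->R) (v0 lX l2 : R) :
  locally_2d (fun x s => ex_derive (fun y => f y s) x) (X v0) v0 ->
  continuity_2d_pt (fun x s => Derive (fun y => f y s) x) (X v0) v0 ->
  is_derive (fun s => f (X v0) s) v0 l2 ->
  is_derive X v0 lX ->
  is_derive (fun v => f (X v) v) v0 (lX * Derive (fun y => f y v0) (X v0) + l2).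
Proof.
  intros [dd Hd] Hc H2 HX.
  apply is_derive_Reals in H2. apply is_derive_Reals in HX.
  apply is_derive_Reals. intros eps Heps.
  set (D := Derive (fun y => f y v0) (X v0)).
  set (M := Rabs lX + Rabs D + 2).
  assert (HM : 0 < M) by (unfold M; pose proof (Rabs_pos lX); pose proof (Rabs_pos D); lra).
  set (e1 := Rmin 1 (eps / (3 * M))).
  assert (He1 : 0 < e1) by (unfold e1; apply Rmin_pos; [lra| apply Rdiv_lt_0_compat; lra]).
  assert (He1a : e1 <= 1) by apply Rmin_l.
  assert (He1b : e1 <= eps / (3*M)) by apply Rmin_r.
  assert (He1c : e1 * M <= eps/3).
  { apply Rmult_le_compat_r with (r:=M) in He1b; [|lra].
    replace (eps / (3 * M) * M) with (eps/3) in He1b by (field; lra). lra. }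
  destruct (Hc (mkposreal e1 He1)) as [dc Hdc]. simpl in Hdc.
  destruct (HX e1 He1) as [dX HdX].
  destruct (H2 e1 He1) as [d2 Hd2].
  set (m := Rmin dc dd).
  assert (Hm : 0 < m) by (unfold m; apply Rmin_pos; apply cond_pos).
  assert (HlX : 0 < Rabs lX + 1) by (pose proof (Rabs_pos lX); lra).
  set (d3 := m / (Rabs lX + 1)).
  assert (Hd3 : 0 < d3) by (unfold d3; apply Rdiv_lt_0_compat; lra).
  assert (Hdel : 0 < Rmin (Rmin dX d2) (Rmin d3 m)).
  { repeat apply Rmin_pos; try apply cond_pos; lra. }
  exists (mkposreal _ Hdel). simpl. intros h Hh0 Hh.
  pose proof (Rmin_l (Rmin dX d2) (Rmin d3 m)). pose proof (Rmin_r (Rmin dX d2) (Rmin d3 m)).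
  pose proof (Rmin_l dX d2). pose proof (Rmin_r dX d2). pose proof (Rmin_l d3 m). pose proof (Rmin_r d3 m).
  assert (HhX : Rabs h < dX) by lra.
  assert (Hh2 : Rabs h < d2) by lra.
  assert (Hh3 : Rabs h < d3) by lra.
  assert (Hhm : Rabs h < m) by lra.
  assert (Hmd : m <= dc) by apply Rmin_l.
  assert (Hmd' : m <= dd) by apply Rmin_r.
  specialize (HdX h Hh0 HhX). specialize (Hd2 h Hh0 Hh2).
  set (Dq := (X (v0 + h) - X v0) / h) in *.
  assert (HDq : Rabs Dq <= Rabs lX + 1).
  { replace Dq with ((Dq - lX) + lX) by ring.
    eapply Rle_trans; [apply Rabs_triang|]. lra. }
  assert (HX1 : Rabs (X (v0+h) - X v0) < m).
  { replace (X (v0+h) - X v0) with (h * Dq) by (unfold Dq; field; auto).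
    rewrite Rabs_mult.
    destruct (Rle_lt_or_eq_dec 0 (Rabs Dq) (Rabs_pos _)) as [Hp|Hp].
    - apply Rle_lt_trans with (Rabs h * (Rabs lX + 1)).
      + apply Rmult_le_compat_l; [apply Rabs_pos| auto].
      + unfold d3 in Hh3. apply Rlt_div_r in Hh3; [|lra]. lra.
    - rewrite <- Hp, Rmult_0_r. lra. }
  set (s := v0 + h).
  assert (Hs : Rabs (s - v0) < m) by (unfold s; replace (v0 + h - v0) with h by ring; auto).
  destruct (MVT_gen (fun y => f y s) (X v0) (X (v0+h)) (fun y => Derive (fun y => f y s) y)) as [c [Hc1 Hc2]].
  { intros y Hy. apply Derive_correct. apply Hd; [|lra].
    assert (Rabs (y - X v0) < m).
    { destruct (Rle_dec (X v0) (X (v0+h))).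
      - rewrite Rmin_left in Hy by auto. rewrite Rmax_right in Hy by auto.
        rewrite Rabs_right by lra. rewrite Rabs_right in HX1 by lra. lra.
      - rewrite Rmin_right in Hy by lra. rewrite Rmax_left in Hy by lra.
        rewrite Rabs_left by lra. rewrite Rabs_left in HX1 by lra. lra. }
    lra. }
  { intros y Hy. apply continuity_pt_filterlim. apply (ex_derive_continuous (fun y => f y s)). apply Hd; [|lra].
    assert (Rabs (y - X v0) < m).
    { destruct (Rle_dec (X v0) (X (v0+h))).
      - rewrite Rmin_left in Hy by auto. rewrite Rmax_right in Hy by auto.
        rewrite Rabs_pos_eq by lra. rewrite Rabs_pos_eq in HX1 by lra. lra.
      - rewrite Rmin_right in Hy by lra. rewrite Rmax_left in Hy by lra.
        rewrite Rabs_left1 by lra. rewrite Rabs_left in HX1 by lra. lra. }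
    lra. }
  assert (Hcm : Rabs (c - X v0) < m).
  { destruct (Rle_dec (X v0) (X (v0+h))).
    - rewrite Rmin_left in Hc1 by auto. rewrite Rmax_right in Hc1 by auto.
      rewrite Rabs_pos_eq by lra. rewrite Rabs_pos_eq in HX1 by lra. lra.
    - rewrite Rmin_right in Hc1 by lra. rewrite Rmax_left in Hc1 by lra.
      rewrite Rabs_left1 by lra. rewrite Rabs_left in HX1 by lra. lra. }
  assert (Hdf : Rabs (Derive (fun y => f y s) c - D) < e1).
  { apply Hdc; lra. }
  replace ((f (X s) s - f (X v0) v0) / h - (lX * D + l2))
    with ((Derive (fun y => f y s) c - D) * Dq + D * (Dq - lX)
          + ((f (X v0) (v0 + h) - f (X v0) v0) / h - l2)).
  2:{ unfold Dq. unfold s in *.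
      replace (f (X (v0+h)) (v0+h)) with (Derive (fun y => f y (v0+h)) c * (X (v0 + h) - X v0) + f (X v0) (v0+h)) by lra.
      unfold s. field. auto. }
  eapply Rle_lt_trans; [apply Rabs_triang|].
  eapply Rle_lt_trans; [apply Rplus_le_compat_r; apply Rabs_triang|].
  rewrite !Rabs_mult.
  assert (Rabs (Derive (fun y => f y s) c - D) * Rabs Dq <= e1 * (Rabs lX + 1)).
  { apply Rmult_le_compat; try apply Rabs_pos; lra. }
  assert (Rabs D * Rabs (Dq - lX) <= Rabs D * e1).
  { apply Rmult_le_compat_l; [apply Rabs_pos| lra]. }
  unfold M in He1c. nra.
Qed.

Lemma const_interval (f : R -> R) (l r : R) :
  (forall t, l < t < r -> is_derive f t 0) ->
  forall x y, l < x < r -> l < y < r -> f x = f y.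
Proof.
  intros Hd x y Hx Hy.
  destruct (MVT_gen f x y (fun _ => 0)) as [c [Hc1 Hc2]].
  - intros t Ht. apply Hd. split.
    + apply Rle_lt_trans with (Rmin x y); [apply Rmin_glb; lra| apply Ht].
    + apply Rlt_le_trans with (Rmax x y); [apply Ht| apply Rmax_lub; lra].
  - intros t Ht. apply continuity_pt_filterlim. apply (ex_derive_continuous f).
    eexists. apply Hd. split.
    + apply Rlt_le_trans with (Rmin x y); [apply Rmin_glb_lt; lra| apply Ht].
    + apply Rle_lt_trans with (Rmax x y); [apply Ht| apply Rmax_lub_lt; lra].
  - lra.
Qed.


Definition Ef (u tau : R) (H Q : R -> R) (v : R) := 2*((u+v^2)*Q v^2 - 1)/H v + 2*tau*H v.
Definition Af (u tau : R) (H Q : R -> R) (v : R) :=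
  (/H v + Ef u tau H Q v/4 - sqrt(u+v^2)*Q v/H v)/(2*(sqrt(u+v^2)+v)^2).
Definition Cf (u tau : R) (H Q : R -> R) (v : R) :=
  (/H v + Ef u tau H Q v/4 + sqrt(u+v^2)*Q v/H v)/(2*(sqrt(u+v^2)-v)^2).

Lemma sqrt_facts (u v : R) : 0 < u ->
  let b := sqrt (u+v^2) in b*b = u+v^2 /\ 0 < b /\ 0 < b + v /\ 0 < b - v.
Proof.
  intros Hu b.
  assert (Hp : 0 < u+v^2) by nra.
  assert (Hbb : b*b = u+v^2) by (apply sqrt_sqrt; lra).
  assert (Hb : 0 < b) by (apply sqrt_lt_R0; lra).
  split; [auto|split;[auto|]]. nra.
Qed.

Section VS.
Variables (u tau V : R) (H Q : R -> R).
Hypothesis Hu : 0 < u.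
Hypothesis HODE : forall v, -V < v < V -> 0 < H v /\ is_derive H v (2*Q v*H v) /\
   is_derive Q v (Q v^2 + (-tau*H v^2 - 1 - v*Q v)/(u+v^2)).

Lemma Ef_deriv v : -V < v < V -> is_derive (Ef u tau H Q) v 0.
Proof.
  intros Hv. destruct (HODE v Hv) as [HH [HdH HdQ]].
  unfold Ef. auto_derive.
  - repeat split; try (eexists; eauto); lra.
  - rD HdH. rD HdQ.
    field. split; nra.
Qed.

Lemma Af_deriv v : -V < v < V -> is_derive (Af u tau H Q) v 0.
Proof.
  intros Hv. destruct (HODE v Hv) as [HH [HdH HdQ]].
  pose proof (Ef_deriv v Hv) as HE.
  destruct (sqrt_facts u v Hu) as [Hbb [Hb [Hbp Hbm]]].
  unfold Af. auto_derive; replace (u + v*(v*1)) with (u+v^2) by ring.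
  - set (b := sqrt (u+v^2)) in *.
    repeat split; try (eexists; eauto; fail); try lra; nra.
  - rD HdH. rD HdQ. rD HE.
    unfold Ef.
    set (b := sqrt (u+v^2)) in *. clearbody b.
    assert (Hu' : u = b*b - v*v) by nra. rewrite Hu'.
    field. repeat split; nra.
Qed.
Lemma Cf_deriv v : -V < v < V -> is_derive (Cf u tau H Q) v 0.
Proof.
  intros Hv. destruct (HODE v Hv) as [HH [HdH HdQ]].
  pose proof (Ef_deriv v Hv) as HE.
  destruct (sqrt_facts u v Hu) as [Hbb [Hb [Hbp Hbm]]].
  unfold Cf. auto_derive; replace (u + v*(v*1)) with (u+v^2) by ring.
  - set (b := sqrt (u+v^2)) in *.
    repeat split; try (eexists; eauto; fail); try lra; nra.
  - rD HdH. rD HdQ. rD HE.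
    unfold Ef.
    set (b := sqrt (u+v^2)) in *. clearbody b.
    assert (Hu' : u = b*b - v*v) by nra. rewrite Hu'.
    field. repeat split; nra.
Qed.

Lemma v_struct v : 0 < V -> -V < v < V ->
  / H v = Af u tau H Q 0 * (sqrt(u+v^2)+v)^2 + Cf u tau H Q 0 * (sqrt(u+v^2)-v)^2
          - Ef u tau H Q 0 / 4.
Proof.
  intros HV Hv.
  assert (H0 : -V < 0 < V) by lra.
  rewrite <- (const_interval _ _ _ Af_deriv v 0 Hv H0).
  rewrite <- (const_interval _ _ _ Cf_deriv v 0 Hv H0).
  rewrite <- (const_interval _ _ _ Ef_deriv v 0 Hv H0).
  destruct (HODE v Hv) as [HH _].
  destruct (sqrt_facts u v Hu) as [Hbb [Hb [Hbp Hbm]]].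
  unfold Af, Cf. set (b := sqrt (u+v^2)) in *. clearbody b. set (E := Ef u tau H Q v).
  field. repeat split; nra.
Qed.
End VS.

Definition EF tau (f0 Q0 : R -> R) u := 2*(u*Q0 u^2 - 1)/f0 u + 2*tau*f0 u.
Definition aF tau f0 Q0 u := (/f0 u + EF tau f0 Q0 u/4 - sqrt u * Q0 u / f0 u)/(2*u).
Definition cF tau f0 Q0 u := (/f0 u + EF tau f0 Q0 u/4 + sqrt u * Q0 u / f0 u)/(2*u).
Definition BF tau f0 Q0 u := - EF tau f0 Q0 u / 8.

Section US.
Variables (tau : R) (f0 Q0 : R -> R) (u : R).
Hypothesis Hu : 0 < u.
Hypothesis Hf : 0 < f0 u.
Hypothesis Hdf : is_derive f0 u (f0 u*(3*Q0 u^2 - (tau*f0 u^2+1)/u)/2).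
Hypothesis HdQ : is_derive Q0 u (Q0 u^3/2 - Q0 u*(3*tau*f0 u^2+2)/(2*u)).

Lemma aF_deriv : is_derive (aF tau f0 Q0) u (-2 * aF tau f0 Q0 u ^2 * f0 u).
Proof.
  unfold aF, EF. auto_derive.
  - repeat split; try (eexists; eauto; fail); lra.
  - rD Hdf. rD HdQ. pose proof (sqrt_sqrt u (Rlt_le _ _ Hu)). pose proof (sqrt_lt_R0 u Hu).
    set (r := sqrt u) in *. clearbody r. subst u. field. lra.
Qed.
Lemma cF_deriv : is_derive (cF tau f0 Q0) u (-2 * cF tau f0 Q0 u ^2 * f0 u).
Proof.
  unfold cF, EF. auto_derive.
  - repeat split; try (eexists; eauto; fail); lra.
  - rD Hdf. rD HdQ. pose proof (sqrt_sqrt u (Rlt_le _ _ Hu)). pose proof (sqrt_lt_R0 u Hu).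
    set (r := sqrt u) in *. clearbody r. subst u. field. lra.
Qed.
Lemma BF_deriv : is_derive (BF tau f0 Q0) u (2 * aF tau f0 Q0 u * cF tau f0 Q0 u * u * f0 u).
Proof.
  unfold aF, cF, BF, EF. auto_derive.
  - repeat split; try (eexists; eauto; fail); lra.
  - rD Hdf. rD HdQ. pose proof (sqrt_sqrt u (Rlt_le _ _ Hu)). pose proof (sqrt_lt_R0 u Hu).
    set (r := sqrt u) in *. clearbody r. subst u. field. lra.
Qed.
End US.

Lemma constraint tau f0 Q0 u : 0 < u -> 0 < f0 u ->
  4*(aF tau f0 Q0 u * cF tau f0 Q0 u * u^2 - BF tau f0 Q0 u ^2) = tau /\
  2 * BF tau f0 Q0 u + u * (aF tau f0 Q0 u + cF tau f0 Q0 u) = / f0 u.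
Proof.
  intros Hu Hf. unfold aF, cF, BF, EF.
  pose proof (sqrt_sqrt u (Rlt_le _ _ Hu)). pose proof (sqrt_lt_R0 u Hu).
  set (r := sqrt u) in *. clearbody r. subst u. split; field; lra.
Qed.
Lemma zero_prop (a g : R -> R) (L : R) :
  (forall u, 0 < u < L -> is_derive a u (g u * a u)) ->
  (forall u, 0 < u < L -> continuous g u) ->
  forall u1 u2, 0 < u1 < L -> 0 < u2 < L -> a u1 = 0 -> a u2 = 0.
Proof.
  intros Hd Hc u1 u2 H1 H2 Ha.
  set (G := fun u => RInt g u1 u).
  assert (HG : forall u, 0 < u < L -> is_derive G u (g u)).
  { intros u Hu. unfold G. apply (is_derive_RInt g (fun u => RInt g u1 u) u1 u); [|apply Hc; auto].
    assert (He : 0 < Rmin u (L-u)) by (apply Rmin_pos; lra).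
    exists (mkposreal _ He). intros y Hy.
    unfold ball in Hy; simpl in Hy; unfold AbsRing_ball, abs, minus, plus, opp in Hy; simpl in Hy.
    pose proof (Rmin_l u (L-u)). pose proof (Rmin_r u (L-u)).
    assert (0 < y < L) by (apply Rabs_def2 in Hy; lra).
    apply (RInt_correct g u1 y). apply (ex_RInt_continuous g u1 y). intros z Hz. apply Hc.
    split.
    + apply Rlt_le_trans with (Rmin u1 y); [apply Rmin_glb_lt; lra| apply Hz].
    + apply Rle_lt_trans with (Rmax u1 y); [apply Hz| apply Rmax_lub_lt; lra]. }
  set (k := fun u => a u * exp (- G u)).
  assert (Hk : forall u, 0 < u < L -> is_derive k u 0).
  { intros u Hu. unfold k.
    pose proof (Hd u Hu) as Ha'. pose proof (HG u Hu) as HG'.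
    auto_derive.
    - split; [eexists; eauto|split; [eexists; eauto| auto]].
    - rD Ha'. rD HG'. ring. }
  pose proof (const_interval k 0 L Hk u2 u1 H2 H1) as Hkk.
  unfold k in Hkk. rewrite Ha, Rmult_0_l in Hkk.
  pose proof (exp_pos (- G u2)). nra.
Qed.

Lemma dom_open b0 x s : dom b0 x s ->
  exists d : posreal, forall x' s', Rabs (x'-x) < d -> Rabs (s'-s) < d -> dom b0 x' s'.
Proof.
  intros [[Hx1 Hx2] Hs].
  set (m := x - s^2). set (n := b0^2 - x).
  assert (Hm : 0 < m) by (unfold m; lra). assert (Hn : 0 < n) by (unfold n; lra).
  pose proof (Rabs_pos s) as Has.
  set (d := Rmin 1 (Rmin n (m/(2*Rabs s+3)))).
  assert (Hd : 0 < d) by (unfold d; repeat apply Rmin_pos; try lra; apply Rdiv_lt_0_compat; lra).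
  assert (Hd1 : d <= 1) by apply Rmin_l.
  assert (Hd2 : d <= n) by (eapply Rle_trans; [apply Rmin_r| apply Rmin_l]).
  assert (Hd3 : d <= m/(2*Rabs s+3)) by (eapply Rle_trans; [apply Rmin_r| apply Rmin_r]).
  assert (Hd3' : d*(2*Rabs s+3) <= m).
  { apply Rmult_le_compat_r with (r := 2*Rabs s+3) in Hd3; [|lra].
    replace (m / (2 * Rabs s + 3) * (2 * Rabs s + 3)) with m in Hd3 by (field; lra). lra. }
  exists (mkposreal d Hd). simpl. intros x' s' H1 H2.
  apply Rabs_def2 in H1. destruct H1 as [H1a H1b].
  assert (Hs' : Rabs s' < Rabs s + d).
  { replace s' with ((s' - s) + s) by ring. eapply Rle_lt_trans; [apply Rabs_triang|]. lra. }
  assert (Hs2 : s'^2 < (Rabs s + d)^2).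
  { pose proof (Rsqr_abs s') as Hq. unfold Rsqr in Hq. pose proof (Rabs_pos s'). nra. }
  assert (Hss : (Rabs s)^2 = s^2) by (pose proof (Rsqr_abs s) as Hq; unfold Rsqr in Hq; nra).
  unfold dom, m, n in *. split; [split|]; nra.
Qed.

Definition DP1 (phi : R -> R -> R) x s :=
  (D1 (D2 phi) x s + 2*s*D1 (D1 phi) x s)/(2*phi x s)
  - (D2 phi x s + 2*s*D1 phi x s)*(2*D1 phi x s)/((2*phi x s)*(2*phi x s)).
Definition DP2 (phi : R -> R -> R) x s :=
  (D2 (D2 phi) x s + 2*D1 phi x s + 2*s*D2 (D1 phi) x s)/(2*phi x s)
  - (D2 phi x s + 2*s*D1 phi x s)*(2*D2 phi x s)/((2*phi x s)*(2*phi x s)).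

Lemma quot_dx (f2 f1 f0 : R -> R) c x d2 d1 d0 :
  is_derive f2 x d2 -> is_derive f1 x d1 -> is_derive f0 x d0 -> f0 x <> 0 ->
  is_derive (fun y => (f2 y + c*f1 y)/(2*f0 y)) x
    ((d2 + c*d1)/(2*f0 x) - (f2 x + c*f1 x)*(2*d0)/((2*f0 x)*(2*f0 x))).
Proof.
  intros H2 H1 H0 Hn. auto_derive.
  - repeat split; try (eexists; eauto; fail). lra.
  - rD H2. rD H1. rD H0. field. auto.
Qed.
Lemma quot_ds (f2 f1 f0 : R -> R) x d2 d1 d0 :
  is_derive f2 x d2 -> is_derive f1 x d1 -> is_derive f0 x d0 -> f0 x <> 0 ->
  is_derive (fun y => (f2 y + 2*y*f1 y)/(2*f0 y)) x
    ((d2 + 2*f1 x + 2*x*d1)/(2*f0 x) - (f2 x + 2*x*f1 x)*(2*d0)/((2*f0 x)*(2*f0 x))).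
Proof.
  intros H2 H1 H0 Hn. auto_derive.
  - repeat split; try (eexists; eauto; fail). lra.
  - rD H2. rD H1. rD H0. field. auto.
Qed.

Lemma deriv_vk (g : R -> R -> R) u : continuity_2d_pt g u 0 ->
  is_derive (fun v => v * g (u+v^2) v) 0 (g u 0).
Proof.
  intros Hc. apply is_derive_Reals. intros eps Heps.
  destruct (Hc (mkposreal eps Heps)) as [d Hd]. simpl in Hd.
  assert (Hm : 0 < Rmin 1 d) by (apply Rmin_pos; [lra| apply cond_pos]).
  exists (mkposreal _ Hm). simpl. intros h Hh0 Hh.
  pose proof (Rmin_l 1 d). pose proof (Rmin_r 1 d).
  replace (0 + h) with h by ring. replace (u + h*(h*1)) with (u+h^2) by ring.
  replace ((h * g (u + h^2) h - 0 * g (u + 0 * (0 * 1)) 0) / h - g u 0) with (g (u+h^2) h - g u 0) by (field; auto).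
  apply Hd.
  - replace (u + h^2 - u) with (h*h) by ring. rewrite Rabs_mult.
    pose proof (Rabs_pos h). nra.
  - replace (h - 0) with h by ring. lra.
Qed.

Lemma sq_lt V v : 0 < V -> -V < v < V -> v^2 < V^2.
Proof. intros. nra. Qed.

Lemma W_deriv (F0 F1 F2 : R->R) d0 d1 d2 :
  is_derive F0 0 d0 -> is_derive F1 0 d1 -> is_derive F2 0 d2 -> F0 0 <> 0 ->
  is_derive (fun v => (4*F1 v*F0 v - (F2 v + 2*v*F1 v)*F2 v)/(2*F0 v*F0 v)) 0
   (((4*d1*F0 0 + 4*F1 0*d0 - (d2 + 2*F1 0)*F2 0 - F2 0*d2)*(2*F0 0*F0 0)
     - (4*F1 0*F0 0 - F2 0*F2 0)*(4*F0 0*d0))/((2*F0 0*F0 0)*(2*F0 0*F0 0))).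
Proof.
  intros H0 H1 H2 Hn. auto_derive.
  - repeat split; try (eexists; eauto; fail); try (repeat (apply Rmult_integral_contrapositive; split); lra).
  - rD H0. rD H1. rD H2. field. auto.
Qed.

Lemma R_deriv (H Q : R->R) u tau dh dq : 0 < u ->
  is_derive H 0 dh -> is_derive Q 0 dq ->
  is_derive (fun v => Q v^2 + (-tau*H v^2 - 1 - v*Q v)/(u+v^2)) 0
    (2*Q 0*dq + (-tau*2*H 0*dh - Q 0)/u).
Proof.
  intros Hu H0 H1. auto_derive.
  - repeat split; try (eexists; eauto; fail). lra.
  - rD H0. rD H1. field. lra.
Qed.

Lemma locally_I V : 0 < V -> locally 0 (fun v => -V < v < V).
Proof.
  intros HV. exists (mkposreal V HV). intros y Hy.
  unfold ball in Hy; simpl in Hy; unfold AbsRing_ball, abs, minus, plus, opp in Hy; simpl in Hy.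
  apply Rabs_def2 in Hy. lra.
Qed.

Lemma formula_alg (a c B b s tau F : R) : 0 < b + s -> a <> 0 -> 0 < F ->
  4*(a*c*(b*b-s*s)^2 - B^2) = tau -> /F = a*(b+s)^2 + c*(b-s)^2 + 2*B ->
  F = 2*(2*a)*(b+s)^2/((2*a*(b+s)^2 + 2*B)^2 + tau).
Proof.
  intros Hbs Ha HF Ht HD.
  set (D := a*(b+s)^2 + c*(b-s)^2 + 2*B) in *.
  assert (HDp : 0 < D) by (rewrite <- HD; apply Rinv_0_lt_compat; auto).
  assert (E : (2*a*(b+s)^2 + 2*B)^2 + tau = 4*a*(b+s)^2*D) by (rewrite <- Ht; unfold D; ring).
  rewrite E. replace F with (/ / F) by (field; lra). rewrite HD. field.
  split; [lra|split; [nra|auto]].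
Qed.

Lemma ode_alg (a c B f0 u tau : R) : 0 < u -> 0 < f0 ->
  4*(a*c*u^2 - B^2) = tau -> 2*B + u*(a+c) = /f0 ->
  u * (2*a)^2 * (2*(2*a*c*u*f0)) + ((2*B)^2 + tau) * (2*(-2*a^2*f0)) = 0 /\
  2*a * (2*(2*a*c*u*f0)) - 2*(2*B)*(2*(-2*a^2*f0)) - u*(2*a)*(2*(-2*a^2*f0)) - 2*(2*a)^2 = 0.
Proof.
  intros Hu Hf Ht Hn. rewrite <- Ht. split; [ring|].
  replace (2*a * (2*(2*a*c*u*f0)) - 2*(2*B)*(2*(-2*a^2*f0)) - u*(2*a)*(2*(-2*a^2*f0)) - 2*(2*a)^2)
    with (8*a^2*(f0*(2*B + u*(a+c)) - 1)) by ring.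
  rewrite Hn. field. lra.
Qed.

Section Glue.
Variables (mu K b0 : R) (phi : R -> R -> R).
Hypothesis Hmu : mu <> 0.
Hypothesis Hb0 : 0 < b0.
Hypothesis Hsm : smooth_on b0 phi.
Hypothesis Hpos : forall x s, dom b0 x s -> 0 < phi x s.
Hypothesis Hpde : forall x s, dom b0 x s -> pde_system mu K phi x s.

Lemma sm_dx l x s : dom b0 x s -> ex_derive (fun y => pderiv l phi y s) x.
Proof. intros H. apply (Hsm l x s H). Qed.
Lemma sm_ds l x s : dom b0 x s -> ex_derive (fun t => pderiv l phi x t) s.
Proof. intros H. apply (Hsm l x s H). Qed.
Lemma sm_c l x s : dom b0 x s -> continuity_2d_pt (pderiv l phi) x s.
Proof. intros H. apply continuity_2d_pt_filterlim. apply (Hsm l x s H). Qed.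

Lemma CR_pd l u v : dom b0 (u+v^2) v ->
  is_derive (fun w => pderiv l phi (u+w^2) w) v
    (2*v*pderiv (true::l) phi (u+v^2) v + pderiv (false::l) phi (u+v^2) v).
Proof.
  intros Hd.
  assert (HX : is_derive (fun w => u + w^2) v (2*v)).
  { auto_derive; [auto| ring]. }
  refine (CR (pderiv l phi) (fun w => u + w^2) v (2*v) (pderiv (false::l) phi (u+v^2) v) _ _ _ HX).
  - destruct (dom_open _ _ _ Hd) as [d Hd']. exists d. intros. apply sm_dx. apply Hd'; auto.
  - apply (sm_c (true::l)). auto.
  - apply Derive_correct. apply sm_ds. auto.
Qed.

Lemma P_dx x s : dom b0 x s -> is_derive (fun y => psi_of phi y s) x (DP1 phi x s).
Proof.
  intros Hd. pose proof (Hpos x s Hd).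
  unfold psi_of, DP1.
  apply (quot_dx (fun y => D2 phi y s) (fun y => D1 phi y s) (fun y => phi y s)).
  - apply Derive_correct. apply (sm_dx (false::nil)); auto.
  - apply Derive_correct. apply (sm_dx (true::nil)); auto.
  - apply Derive_correct. apply (sm_dx nil); auto.
  - lra.
Qed.
Lemma P_ds x s : dom b0 x s -> is_derive (fun t => psi_of phi x t) s (DP2 phi x s).
Proof.
  intros Hd. pose proof (Hpos x s Hd).
  unfold psi_of, DP2.
  apply (quot_ds (fun y => D2 phi x y) (fun y => D1 phi x y) (fun y => phi x y)).
  - apply Derive_correct. apply (sm_ds (false::nil)); auto.
  - apply Derive_correct. apply (sm_ds (true::nil)); auto.
  - apply Derive_correct. apply (sm_ds nil); auto.
  - lra.
Qed.


Ltac c2d := repeat (first [ apply continuity_2d_pt_plus | apply continuity_2d_pt_minus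
  | apply continuity_2d_pt_mult | apply continuity_2d_pt_inv | apply continuity_2d_pt_const
  | apply continuity_2d_pt_id1 | apply continuity_2d_pt_id2 | apply continuity_2d_pt_opp ]).

Lemma DP1_cont x s : dom b0 x s -> continuity_2d_pt (DP1 phi) x s.
Proof.
  intros Hd. pose proof (Hpos x s Hd).
  unfold DP1, Rdiv. c2d.
  all: try (apply (sm_c (true::false::nil)); auto; fail).
  all: try (apply (sm_c (true::true::nil)); auto; fail).
  all: try (apply (sm_c (true::nil)); auto; fail).
  all: try (apply (sm_c (false::nil)); auto; fail).
  all: try (apply (sm_c nil); auto; fail).
  all: try (apply Rmult_integral_contrapositive; split; lra).
Qed.

Lemma CR_P u v : dom b0 (u+v^2) v ->
  is_derive (fun w => psi_of phi (u+w^2) w) v (2*v*DP1 phi (u+v^2) v + DP2 phi (u+v^2) v).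
Proof.
  intros Hd.
  assert (HX : is_derive (fun w => u + w^2) v (2*v)).
  { auto_derive; [auto| ring]. }
  destruct (dom_open _ _ _ Hd) as [d Hd'].
  pose proof (CR (psi_of phi) (fun w => u + w^2) v (2*v) (DP2 phi (u+v^2) v)) as Hc.
  assert (E : Derive (fun y => psi_of phi y v) (u+v^2) = DP1 phi (u+v^2) v)
    by (apply is_derive_unique; apply P_dx; auto).
  replace (2*v*DP1 phi (u+v^2) v + DP2 phi (u+v^2) v) with
    (2*v * Derive (fun y => psi_of phi y v) ((fun w => u+w^2) v) + DP2 phi (u+v^2) v)
    by (cbv beta; rewrite E; reflexivity).
  apply Hc; auto.
  - exists d. intros. eexists. apply P_dx. apply Hd'; auto.
  - apply continuity_2d_pt_ext_loc with (DP1 phi).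
    + exists d. intros. symmetry. apply is_derive_unique. apply P_dx. apply Hd'; auto.
    + apply DP1_cont; auto.
  - apply P_ds; auto.
Qed.

Lemma dom_curve u v : 0 < u < b0^2 -> -sqrt(b0^2-u) < v < sqrt(b0^2-u) -> dom b0 (u+v^2) v.
Proof.
  intros Hu Hv.
  assert (HV : 0 < sqrt (b0^2-u)) by (apply sqrt_lt_R0; lra).
  pose proof (sqrt_sqrt (b0^2-u) ltac:(lra)).
  pose proof (sq_lt _ v HV Hv).
  unfold dom. split; [split|]; nra.
Qed.

Lemma pde2 x s : dom b0 x s ->
  DP2 phi x s + 2*s*DP1 phi x s =
  psi_of phi x s ^2 + (-(-K/mu)*phi x s^2 - 1 - s*psi_of phi x s)/x.
Proof.
  intros Hd. destruct (Hpde x s Hd) as [_ P2]. cbv zeta in P2.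
  replace (D2 (psi_of phi) x s) with (DP2 phi x s) in P2 by (symmetry; apply is_derive_unique; apply P_ds; auto).
  replace (D1 (psi_of phi) x s) with (DP1 phi x s) in P2 by (symmetry; apply is_derive_unique; apply P_dx; auto).
  destruct Hd as [[Hx _] _].
  apply Rminus_diag_uniq.
  transitivity ((-mu * x * (psi_of phi x s ^ 2 - (DP2 phi x s + 2 * s * DP1 phi x s)) +
       mu * s * psi_of phi x s + mu - K * phi x s ^ 2)/(mu*x)).
  - field. lra.
  - rewrite P2. field. lra.
Qed.

Lemma HODE_phi u : 0 < u < b0^2 -> forall v, -sqrt(b0^2-u) < v < sqrt(b0^2-u) ->
  0 < phi (u+v^2) v /\
  is_derive (fun v => phi (u+v^2) v) v (2*psi_of phi (u+v^2) v*phi (u+v^2) v) /\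
  is_derive (fun v => psi_of phi (u+v^2) v) v
    (psi_of phi (u+v^2) v^2 + (-(-K/mu)*phi (u+v^2) v^2 - 1 - v*psi_of phi (u+v^2) v)/(u+v^2)).
Proof.
  intros Hu v Hv. pose proof (dom_curve u v Hu Hv) as Hd. pose proof (Hpos _ _ Hd) as Hp.
  split; [auto|split].
  - replace (2*psi_of phi (u+v^2) v*phi (u+v^2) v) with
      (2*v*pderiv (true::nil) phi (u+v^2) v + pderiv (false::nil) phi (u+v^2) v).
    + apply (CR_pd nil u v Hd).
    + unfold psi_of. change (pderiv (true::nil) phi) with (D1 phi). change (pderiv (false::nil) phi) with (D2 phi). field. lra.
  - rewrite <- (pde2 (u+v^2) v Hd). rewrite Rplus_comm. apply CR_P; auto.
Qed.

Lemma dom_u0 u : 0 < u < b0^2 -> dom b0 u 0.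
Proof. intros. unfold dom. split; [lra|]. nra. Qed.

Lemma f0_deriv u : 0 < u < b0^2 ->
  is_derive (fun u => phi u 0) u (phi u 0*(3*psi_of phi u 0^2 - ((-K/mu)*phi u 0^2+1)/u)/2).
Proof.
  intros Hu. pose proof (dom_u0 u Hu) as Hd. pose proof (Hpos _ _ Hd) as Hp.
  replace (phi u 0*(3*psi_of phi u 0^2 - ((-K/mu)*phi u 0^2+1)/u)/2) with (D1 phi u 0).
  { apply Derive_correct. apply (sm_dx nil). auto. }
  pose proof (pde2 u 0 Hd) as E. destruct (Hpde u 0 Hd) as [P1 _].
  unfold DP2 in E. rewrite P1 in E. unfold psi_of in *.
  apply Rminus_diag_uniq.
  transitivity ((phi u 0/2) * ((2 * (D1 phi u 0 - 0 * D2 (D1 phi) u 0) + 2 * D1 phi u 0 +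
       2 * 0 * D2 (D1 phi) u 0) / (2 * phi u 0) -
      (D2 phi u 0 + 2 * 0 * D1 phi u 0) * (2 * D2 phi u 0) /
      (2 * phi u 0 * (2 * phi u 0)) + 2 * 0 * DP1 phi u 0 -
      (((D2 phi u 0 + 2 * 0 * D1 phi u 0) / (2 * phi u 0)) ^ 2 +
      (- (- K / mu) * phi u 0 ^ 2 - 1 -
       0 * ((D2 phi u 0 + 2 * 0 * D1 phi u 0) / (2 * phi u 0))) / u))).
  - field. split; lra.
  - rewrite E. ring.
Qed.

Lemma Schw x s : dom b0 x s -> D1 (D2 phi) x s = D2 (D1 phi) x s.
Proof.
  intros Hd. destruct (dom_open _ _ _ Hd) as [d Hd'].
  apply Schwarz.
  - exists d. intros u v H1 H2. pose proof (Hd' u v H1 H2) as Hd2.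
    split; [apply (sm_dx nil); auto|].
    split; [apply (sm_ds nil); auto|].
    split; [apply (sm_dx (false::nil)); auto|].
    apply (sm_ds (true::nil)); auto.
  - apply (sm_c (true::false::nil)); auto.
  - apply (sm_c (false::true::nil)); auto.
Qed.

Lemma Q0_deriv u : 0 < u < b0^2 ->
  is_derive (fun u => psi_of phi u 0) u
    (psi_of phi u 0^3/2 - psi_of phi u 0*(3*(-K/mu)*phi u 0^2+2)/(2*u)).
Proof.
  intros Hu. pose proof (dom_u0 u Hu) as Hd. pose proof (Hpos _ _ Hd) as Hp.
  set (V := sqrt (b0^2-u)).
  assert (HV : 0 < V) by (apply sqrt_lt_R0; lra).
  assert (HI0 : -V < 0 < V) by lra.
  pose proof (HODE_phi u Hu) as HO.
  destruct (HO 0 HI0) as [_ [HdH0 HdQ0]].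
  set (tau := -K/mu) in *.
  set (Rf := fun v => psi_of phi (u+v^2) v^2 + (-tau*phi (u+v^2) v^2 - 1 - v*psi_of phi (u+v^2) v)/(u+v^2)).
  set (Wf := fun v => (4*D1 phi (u+v^2) v*phi (u+v^2) v - (D2 phi (u+v^2) v + 2*v*D1 phi (u+v^2) v)*D2 phi (u+v^2) v)/(2*phi (u+v^2) v*phi (u+v^2) v)).
  set (Sf := fun v => 2*(v*DP1 phi (u+v^2) v) + Wf v).
  assert (HRS : forall v, -V < v < V -> Rf v = Sf v).
  { intros v Hv. destruct (HO v Hv) as [Hpv [_ HdQ]].
    pose proof (dom_curve u v Hu Hv) as Hdv.
    pose proof (CR_P u v Hdv) as HdQ'.
    pose proof (is_derive_unique _ _ _ HdQ) as E1. rewrite (is_derive_unique _ _ _ HdQ') in E1.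
    unfold Rf, Sf, Wf. rewrite <- E1.
    unfold DP2. destruct (Hpde _ _ Hdv) as [P1 _]. rewrite P1. field. lra. }
  pose proof (R_deriv (fun v => phi (u+v^2) v) (fun v => psi_of phi (u+v^2) v) u tau _ _ (proj1 Hu) HdH0 HdQ0) as HR.
  fold Rf in HR.
  assert (HW : is_derive Wf 0
     (((4*D2 (D1 phi) (u+0^2) 0*phi (u+0^2) 0 + 4*D1 phi (u+0^2) 0*D2 phi (u+0^2) 0
        - (D2 (D2 phi) (u+0^2) 0 + 2*D1 phi (u+0^2) 0)*D2 phi (u+0^2) 0 - D2 phi (u+0^2) 0*D2 (D2 phi) (u+0^2) 0)
       *(2*phi (u+0^2) 0*phi (u+0^2) 0)
      - (4*D1 phi (u+0^2) 0*phi (u+0^2) 0 - D2 phi (u+0^2) 0*D2 phi (u+0^2) 0)*(4*phi (u+0^2) 0*D2 phi (u+0^2) 0))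
      /((2*phi (u+0^2) 0*phi (u+0^2) 0)*(2*phi (u+0^2) 0*phi (u+0^2) 0)))).
  { assert (Hd0 : dom b0 (u+0^2) 0) by (replace (u+0^2) with u by ring; auto).
    pose proof (CR_pd nil u 0 Hd0) as C0. pose proof (CR_pd (true::nil) u 0 Hd0) as C1.
    pose proof (CR_pd (false::nil) u 0 Hd0) as C2.
    replace (2*0*pderiv (true::nil) phi (u+0^2) 0 + pderiv (false::nil) phi (u+0^2) 0) with (D2 phi (u+0^2) 0) in C0 by (simpl; ring).
    replace (2*0*pderiv (true::true::nil) phi (u+0^2) 0 + pderiv (false::true::nil) phi (u+0^2) 0) with (D2 (D1 phi) (u+0^2) 0) in C1 by (simpl; ring).
    replace (2*0*pderiv (true::false::nil) phi (u+0^2) 0 + pderiv (false::false::nil) phi (u+0^2) 0) with (D2 (D2 phi) (u+0^2) 0) in C2 by (simpl; ring).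
    apply (W_deriv (fun v => phi (u+v^2) v) (fun v => D1 phi (u+v^2) v) (fun v => D2 phi (u+v^2) v)); auto.
    cbv beta. replace (u+0^2) with u by ring. lra. }
  assert (HS : is_derive Sf 0 (2 * DP1 phi u 0 + ((4*D2 (D1 phi) (u+0^2) 0*phi (u+0^2) 0 + 4*D1 phi (u+0^2) 0*D2 phi (u+0^2) 0
        - (D2 (D2 phi) (u+0^2) 0 + 2*D1 phi (u+0^2) 0)*D2 phi (u+0^2) 0 - D2 phi (u+0^2) 0*D2 (D2 phi) (u+0^2) 0)
       *(2*phi (u+0^2) 0*phi (u+0^2) 0)
      - (4*D1 phi (u+0^2) 0*phi (u+0^2) 0 - D2 phi (u+0^2) 0*D2 phi (u+0^2) 0)*(4*phi (u+0^2) 0*D2 phi (u+0^2) 0))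
      /((2*phi (u+0^2) 0*phi (u+0^2) 0)*(2*phi (u+0^2) 0*phi (u+0^2) 0)))).
  { apply (is_derive_plus (fun v => 2*(v*DP1 phi (u+v^2) v)) Wf); auto.
    apply (is_derive_scal (fun v => v*DP1 phi (u+v^2) v)).
    apply (deriv_vk (DP1 phi)). apply DP1_cont. auto. }
  assert (HR' : is_derive Sf 0 (2 * psi_of phi (u + 0 ^ 2) 0 *
         (psi_of phi (u + 0 ^ 2) 0 ^ 2 +
          (- tau * phi (u + 0 ^ 2) 0 ^ 2 - 1 - 0 * psi_of phi (u + 0 ^ 2) 0) /
          (u + 0 ^ 2)) +
         (- tau * 2 * phi (u + 0 ^ 2) 0 *
          (2 * psi_of phi (u + 0 ^ 2) 0 * phi (u + 0 ^ 2) 0) -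
          psi_of phi (u + 0 ^ 2) 0) / u)).
  { apply is_derive_ext_loc with Rf; auto.
    apply (filter_imp (fun v => -V < v < V)); [|apply locally_I; auto].
    intros; apply HRS; auto. }
  pose proof (is_derive_unique _ _ _ HS) as ES. rewrite (is_derive_unique _ _ _ HR') in ES.
  clear HR' HS HW HR HRS.
  replace (u+0^2) with u in ES by ring.
  replace (psi_of phi u 0^3/2 - psi_of phi u 0*(3*tau*phi u 0^2+2)/(2*u)) with (DP1 phi u 0).
  { apply P_dx. auto. }
  pose proof (f0_deriv u Hu) as Hf0. apply is_derive_unique in Hf0. fold tau in Hf0.
  assert (Hf : D1 phi u 0 = phi u 0 * (3 * psi_of phi u 0 ^ 2 - (tau * phi u 0 ^ 2 + 1) / u) / 2) by exact Hf0.
  destruct (Hpde u 0 Hd) as [P1 _].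
  rewrite <- (Schw u 0 Hd) in ES. rewrite P1 in ES.
  unfold DP1 in *. rewrite Hf in ES. rewrite Hf.
  unfold psi_of in *.
  apply Rminus_diag_uniq.
  match type of ES with ?Rv = ?Sv => transitivity ((Sv - Rv)/6) end.
  - field. split; lra.
  - rewrite ES. field. split; lra.
Qed.

Lemma phi_repr x s : dom b0 x s ->
  let u := x - s^2 in
  let f0 := fun u => phi u 0 in let Q0 := fun u => psi_of phi u 0 in
  / phi x s = aF (-K/mu) f0 Q0 u * (sqrt x + s)^2 + cF (-K/mu) f0 Q0 u * (sqrt x - s)^2
              + 2 * BF (-K/mu) f0 Q0 u.
Proof.
  intros Hd u f0 Q0.
  assert (Hu : 0 < u < b0^2) by (destruct Hd as [[H1 H2] H3]; unfold u; nra).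
  set (V := sqrt (b0^2-u)).
  assert (HV : 0 < V) by (apply sqrt_lt_R0; lra).
  assert (HVV : V*V = b0^2-u) by (apply sqrt_sqrt; lra).
  assert (Hv : -V < s < V).
  { destruct Hd as [[H1 H2] H3]. unfold u in HVV. nra. }
  pose proof (v_struct u (-K/mu) V (fun v => phi (u+v^2) v) (fun v => psi_of phi (u+v^2) v)
     (proj1 Hu) (HODE_phi u Hu) s HV Hv) as E.
  cbv beta in E.
  replace (u + s^2) with x in E by (unfold u; ring).
  rewrite E. unfold Af, Cf, Ef, aF, cF, BF, EF. unfold f0, Q0. cbv beta.
  replace (u + 0^2) with u by ring.
  pose proof (sqrt_sqrt u ltac:(lra)). pose proof (sqrt_lt_R0 u ltac:(lra)).
  assert (Hp0 : 0 < phi u 0) by (apply Hpos; apply dom_u0; auto).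
  set (r := sqrt u) in *. clearbody r.
  set (A := phi u 0) in *. set (Z := psi_of phi u 0) in *.
  clearbody u. rewrite <- H. field. repeat split; lra.
Qed.
End Glue.

Section Main.
Variables (mu K b0 : R) (phi : R -> R -> R).
Hypothesis Hmu : mu <> 0.
Hypothesis Hb0 : 0 < b0.
Hypothesis Hsm : smooth_on b0 phi.
Hypothesis Hpos : forall x s, dom b0 x s -> 0 < phi x s.
Hypothesis Hpde : forall x s, dom b0 x s -> pde_system mu K phi x s.

Let a := aF (-K/mu) (fun u => phi u 0) (fun u => psi_of phi u 0).
Let c := cF (-K/mu) (fun u => phi u 0) (fun u => psi_of phi u 0).
Let B := BF (-K/mu) (fun u => phi u 0) (fun u => psi_of phi u 0).

Lemma f0pos u : 0 < u < b0^2 -> 0 < phi u 0.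
Proof. intros. apply Hpos. apply dom_u0. auto. Qed.

Lemma da u : 0 < u < b0^2 -> is_derive a u (-2 * a u^2 * phi u 0).
Proof.
  intros Hu. apply (aF_deriv (-K/mu) (fun u => phi u 0) (fun u => psi_of phi u 0) u (proj1 Hu) (f0pos u Hu)).
  - apply (f0_deriv mu K b0 phi); auto.
  - apply (Q0_deriv mu K b0 phi); auto.
Qed.
Lemma dc u : 0 < u < b0^2 -> is_derive c u (-2 * c u^2 * phi u 0).
Proof.
  intros Hu. apply (cF_deriv (-K/mu) (fun u => phi u 0) (fun u => psi_of phi u 0) u (proj1 Hu) (f0pos u Hu)).
  - apply (f0_deriv mu K b0 phi); auto.
  - apply (Q0_deriv mu K b0 phi); auto.
Qed.
Lemma dB u : 0 < u < b0^2 -> is_derive B u (2 * a u * c u * u * phi u 0).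
Proof.
  intros Hu. apply (BF_deriv (-K/mu) (fun u => phi u 0) (fun u => psi_of phi u 0) u (proj1 Hu) (f0pos u Hu)).
  - apply (f0_deriv mu K b0 phi); auto.
  - apply (Q0_deriv mu K b0 phi); auto.
Qed.
Lemma cons u : 0 < u < b0^2 ->
  4*(a u * c u * u^2 - B u ^2) = -K/mu /\ 2 * B u + u * (a u + c u) = / phi u 0.
Proof. intros Hu. apply (constraint (-K/mu) (fun u => phi u 0) (fun u => psi_of phi u 0) u (proj1 Hu) (f0pos u Hu)). Qed.

Lemma repr x s : dom b0 x s ->
  / phi x s = a (x - s^2) * (sqrt x + s)^2 + c (x - s^2) * (sqrt x - s)^2 + 2 * B (x - s^2).
Proof. intros Hd. exact (phi_repr mu K b0 phi Hmu Hsm Hpos Hpde x s Hd). Qed.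

Lemma zero_all (f : R -> R) : (forall u, 0 < u < b0^2 -> is_derive f u (-2 * f u^2 * phi u 0)) ->
  forall u1 u2, 0 < u1 < b0^2 -> 0 < u2 < b0^2 -> f u1 = 0 -> f u2 = 0.
Proof.
  intros Hf. apply (zero_prop f (fun u => -2 * f u * phi u 0) (b0^2)).
  - intros u Hu. replace (-2 * f u * phi u 0 * f u) with (-2 * f u^2 * phi u 0) by ring. auto.
  - intros u Hu. apply (ex_derive_continuous (fun u => -2 * f u * phi u 0)).
    apply ex_derive_mult; [apply ex_derive_mult|].
    + apply ex_derive_const.
    + eexists; apply Hf; auto.
    + eexists. apply (f0_deriv mu K b0 phi); auto.
Qed.

Lemma sqrt_dom x s : dom b0 x s -> 0 < sqrt x + s /\ 0 < sqrt x - s /\ sqrt x * sqrt x = x.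
Proof.
  intros [[H1 H2] H3].
  pose proof (sqrt_sqrt x ltac:(lra)). pose proof (sqrt_lt_R0 x H1).
  split; [nra|split; [nra|auto]].
Qed.

Lemma dom_u x s : dom b0 x s -> 0 < x - s^2 < b0^2.
Proof. intros [[H1 H2] H3]. split; nra. Qed.

Lemma main_sec :
  (exists x1 s1 x2 s2, dom b0 x1 s1 /\ dom b0 x2 s2 /\ phi x1 s1 <> phi x2 s2) ->
  exists (eps : R) (p q : R -> R),
    (eps = 1 \/ eps = -1) /\
    (forall u, 0 < u < b0 ^ 2 -> ex_derive p u /\ ex_derive q u) /\
    (forall u, 0 < u < b0 ^ 2 ->
        u * (q u) ^ 2 * Derive p u + ((p u) ^ 2 + (-K/mu)) * Derive q u = 0 /\
        q u * Derive p u - 2 * p u * Derive q u - u * q u * Derive q u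
          - 2 * (q u) ^ 2 = 0) /\
    (forall x s, dom b0 x s -> phi x s = phi_formula eps (-K/mu) p q (x - s ^ 2) s).
Proof.
  intros Hnc.
  assert (Hcase : (forall u, 0 < u < b0^2 -> a u <> 0) \/ (forall u, 0 < u < b0^2 -> c u <> 0)).
  { destruct (classic (exists u1, 0 < u1 < b0^2 /\ a u1 = 0)) as [[u1 [Hu1 Ha1]]|Hna].
    2:{ left. intros u Hu Hau. apply Hna. exists u; auto. }
    destruct (classic (exists u2, 0 < u2 < b0^2 /\ c u2 = 0)) as [[u2 [Hu2 Hc2]]|Hnc2].
    2:{ right. intros u Hu Hcu. apply Hnc2. exists u; auto. }
    exfalso.
    assert (Ha0 : forall u, 0 < u < b0^2 -> a u = 0) by (intros; apply (zero_all a da u1 u); auto).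
    assert (Hc0 : forall u, 0 < u < b0^2 -> c u = 0) by (intros; apply (zero_all c dc u2 u); auto).
    assert (HBc : forall u v, 0 < u < b0^2 -> 0 < v < b0^2 -> B u = B v).
    { apply (const_interval B 0 (b0^2)). intros t Ht. pose proof (dB t Ht) as H.
      rewrite (Ha0 t Ht) in H. replace (2 * 0 * c t * t * phi t 0) with 0 in H by ring. exact H. }
    destruct Hnc as [x1 [s1 [x2 [s2 [D1' [D2' Hne]]]]]].
    apply Hne.
    pose proof (repr x1 s1 D1') as R1. pose proof (repr x2 s2 D2') as R2.
    rewrite (Ha0 _ (dom_u _ _ D1')), (Hc0 _ (dom_u _ _ D1')) in R1.
    rewrite (Ha0 _ (dom_u _ _ D2')), (Hc0 _ (dom_u _ _ D2')) in R2.
    rewrite (HBc (x1 - s1^2) (x2 - s2^2) (dom_u _ _ D1') (dom_u _ _ D2')) in R1.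
    assert (E : / phi x1 s1 = / phi x2 s2) by (rewrite R1, R2; ring).
    rewrite <- (Rinv_inv (phi x1 s1)), <- (Rinv_inv (phi x2 s2)), E. reflexivity. }
  destruct Hcase as [Ha | Hc].
  - exists 1, (fun u => 2 * B u), (fun u => 2 * a u). split; [left; auto|]. split; [|split].
    + intros u Hu. split; eexists.
      * apply (is_derive_scal B). apply dB; auto.
      * apply (is_derive_scal a). apply da; auto.
    + intros u Hu.
      pose proof (is_derive_scal B u 2 _ (dB u Hu)) as HHB. rD HHB.
      pose proof (is_derive_scal a u 2 _ (da u Hu)) as HHa. rD HHa.
      destruct (cons u Hu) as [C1 C2].
      apply ode_alg; [lra| apply f0pos; auto| auto | auto].
    + intros x s Hd. unfold phi_formula. destruct (sqrt_dom x s Hd) as [Hp [Hm Hxx]].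
      replace (x - s^2 + s^2) with x by ring. replace (1*s) with s by ring.
      destruct (cons (x - s^2) (dom_u x s Hd)) as [C1 C2].
      apply (formula_alg (a (x-s^2)) (c (x-s^2)) (B (x-s^2)) (sqrt x) s (-K/mu) (phi x s)); auto.
      * apply Ha, dom_u; auto.
      * replace (sqrt x * sqrt x - s*s) with (x - s^2) by (rewrite Hxx; ring). exact C1.
      * apply repr; auto.
  - exists (-1), (fun u => 2 * B u), (fun u => 2 * c u). split; [right; auto|]. split; [|split].
    + intros u Hu. split; eexists.
      * apply (is_derive_scal B). apply dB; auto.
      * apply (is_derive_scal c). apply dc; auto.
    + intros u Hu.
      pose proof (is_derive_scal B u 2 _ (dB u Hu)) as HHB. rD HHB.
      pose proof (is_derive_scal c u 2 _ (dc u Hu)) as HHc. rD HHc.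
      destruct (cons u Hu) as [C1 C2].
      replace (2 * a u * c u * u * phi u 0) with (2 * c u * a u * u * phi u 0) by ring.
      apply ode_alg; [lra| apply f0pos; auto| rewrite <- C1; ring | rewrite <- C2; ring].
    + intros x s Hd. unfold phi_formula. destruct (sqrt_dom x s Hd) as [Hp [Hm Hxx]].
      replace (x - s^2 + s^2) with x by ring. replace (-1*s) with (-s) by ring.
      destruct (cons (x - s^2) (dom_u x s Hd)) as [C1 C2].
      apply (formula_alg (c (x-s^2)) (a (x-s^2)) (B (x-s^2)) (sqrt x) (-s) (-K/mu) (phi x s)); auto.
      * apply Hc, dom_u; auto.
      * replace (sqrt x * sqrt x - -s * -s) with (x - s^2) by (rewrite Hxx; ring). rewrite <- C1. ring.
      * rewrite (repr x s Hd). ring.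
Qed.
End Main.

Theorem lemma7p2 (mu K b0 : R) (phi : R -> R -> R) :
  mu <> 0 -> 0 < b0 ->
  smooth_on b0 phi ->
  (forall x s, dom b0 x s -> 0 < phi x s) ->
  (forall x s, dom b0 x s -> pde_system mu K phi x s) ->
  (exists x1 s1 x2 s2, dom b0 x1 s1 /\ dom b0 x2 s2 /\ phi x1 s1 <> phi x2 s2) ->
  let tau := - K / mu in
  exists (eps : R) (p q : R -> R),
    (eps = 1 \/ eps = -1) /\
    (forall u, 0 < u < b0 ^ 2 -> ex_derive p u /\ ex_derive q u) /\
    (forall u, 0 < u < b0 ^ 2 ->
        u * (q u) ^ 2 * Derive p u + ((p u) ^ 2 + tau) * Derive q u = 0 /\
        q u * Derive p u - 2 * p u * Derive q u - u * q u * Derive q u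
          - 2 * (q u) ^ 2 = 0) /\
    (forall x s, dom b0 x s -> phi x s = phi_formula eps tau p q (x - s ^ 2) s).
Proof.
  intros Hmu Hb0 Hsm Hpos Hpde Hnc tau.
  exact (main_sec mu K b0 phi Hmu Hsm Hpos Hpde Hnc).
Qed.
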